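(* Assume Hypothesis 1 (stated in the context). Then: 1. $X_{\max}=T_{C_{\max}}\rtimes X_{\mathbf 0}$; 2. $C_{\max}$ is $(X_{\max},2)$-neighbour-transitive and $\delta_{\max}\ge5$; 3. the kernel $K$ of the action of $X$ on $M$ equals the kernel of the action of $X_{\max}$ on $M$, namely $K=X\cap B=X_{\max}\cap B=T_{C_{\max}}$; 4. $C_{\max}$ is an $\mathbb F_2X_{\mathbf 0}$-module; 5. $|C|/|C_{\max}|=|X|/|X_{\max}|=|X^M|/|X_{\mathbf 0}^M|$.
   Context: $H(m,2)$: vertex set $\mathbb F_2^m$, coordinates indexed by a set $M$, $|M|=m$, adjacency when differing in exactly one coordinate; $d$ Hamming distance. For a code $C$: minimum distance $\delta$, covering radius $\rho=\max_\alpha d(\alpha,C)$, $C_i=\{\alpha:d(\alpha,C)=i\}$. $\mathrm{Aut}(H(m,2))=B\rtimes L$, $B\cong\mathbb Z_2^m$ the translations $t_\beta:\alpha\mapsto\alpha+\beta$, $L\cong\mathrm{Sym}(M)$ coordinate permutations; $\mathrm{Aut}(C)$ is the setwise stabiliser of $C$. For $X\le B\rtimes L$, $X^M$ is the permutation group induced on $M$ (image in $L$), $X_{\mathbf 0}$ the stabiliser of $\mathbf 0$. $C$ is $(X,s)$-neighbour-transitive if $X\le\mathrm{Aut}(C)$ is transitive on each of $C,C_1,\dots,C_s$; completely transitive if $\mathrm{Aut}(C)$ is transitive on each of $C,C_1,\dots,C_\rho$. For a linear code $D$, $T_D=\{t_\beta:\beta\in D\}$. For a code $C\ni\mathbf 0$,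 the maximal linear subcode $C_{\max}$ is the largest linear subcode $D\subseteq C$ with $T_D\le\mathrm{Aut}(C)$. Hypothesis 1: $C$ is a completely transitive code in $H(m,2)$ with $\mathbf 0\in C$ and minimum distance $\delta\ge5$; $X=\mathrm{Aut}(C)$; $C_{\max}$ is the maximal linear subcode of $C$ with minimum distance $\delta_{\max}$; $X_{\max}$ is the setwise stabiliser of $C_{\max}$ in $X$; and $2\le\dim C_{\max}\le m-2$. *)

(* Defs.v *)
From HB Require Import structures.
From mathcomp Require Import all_boot all_order all_algebra all_fingroup.
Set Implicit Arguments. Unset Strict Implicit. Unset Printing Implicit Defensive.
Import GRing.Theory.

(* The Hamming graph H(m,2): vertices are row vectors 'rV['F_2]_m,
   coordinate set M = 'I_m. Automorphisms are represented as permutations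
   of the vertex set. *)

Notation vert m := ('rV['F_2]_m).

Section Hamming.
Variable m : nat.
Local Notation V := (vert m).
Local Open Scope ring_scope.

Definition hdist (x y : V) : nat := #|[set i : 'I_m | x 0 i != y 0 i]|.

Lemma tr_inj (b : V) : injective (fun a : V => a + b).
Proof. exact: addIr. Qed.
Definition tr (b : V) : {perm V} := perm (@tr_inj b).

Lemma cperm_inj (s : 'S_m) : injective (fun a : V => col_perm s a).
Proof.
move=> a b /(congr1 (col_perm s^-1)); rewrite -!col_permM mulVg !col_perm1 //.
Qed.
Definition cperm (s : 'S_m) : {perm V} := perm (@cperm_inj s).

Definition Btr : {set {perm V}} := [set tr b | b in [set: V]].
Definition Lco : {set {perm V}} := [set cperm s | s in [set: 'S_m]].
Definition AutH : {set {perm V}} := (Btr * Lco)%g.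

Definition TD (D : {set V}) : {set {perm V}} := [set tr b | b in D].

Definition AutC (C : {set V}) : {set {perm V}} :=
  [set g in AutH | [set g x | x in C] == C].

Definition setstab (X : {set {perm V}}) (D : {set V}) : {set {perm V}} :=
  [set g in X | [set g x | x in D] == D].

Definition stab0 (X : {set {perm V}}) : {set {perm V}} :=
  [set g in X | g 0 == 0].

(* the L-part of g in B L : g = (linpart g) followed by t_{g 0};
   X^M is realised as the image of X in L *)
Definition linpart (g : {perm V}) : {perm V} := (g * tr (- g 0))%g.
Definition onM (X : {set {perm V}}) : {set {perm V}} := [set linpart g | g in X].
Definition kerM (X : {set {perm V}}) : {set {perm V}} :=
  [set g in X | linpart g == 1%g].

Definition dcode (C : {set V}) (a : V) : nat := \big[minn/m]_(c in C) hdist a c.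
Definition Ci (C : {set V}) (i : nat) : {set V} := [set a | dcode C a == i].
Definition covrad (C : {set V}) : nat := \max_(a : V) dcode C a.

Definition mindist_ge (C : {set V}) (d : nat) : Prop :=
  forall x y, x \in C -> y \in C -> x != y -> (d <= hdist x y)%N.

Definition nbr_trans (X : {set {perm V}}) (C : {set V}) (s : nat) : Prop :=
  X \subset AutC C /\
  forall i, (i <= s)%N -> [transitive X, on Ci C i | 'P].

Definition completely_transitive (C : {set V}) : Prop :=
  forall i, (i <= covrad C)%N -> [transitive AutC C, on Ci C i | 'P].

Definition lin_code (D : {set V}) : Prop :=
  0 \in D /\ forall x y, x \in D -> y \in D -> x + y \in D.

Definition dimc (D : {set V}) : nat := \dim (<<enum D>>%VS).

Definition is_max_lin_subcode (C D : {set V}) : Prop :=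
  [/\ lin_code D, D \subset C, TD D \subset AutC C &
      forall D', lin_code D' -> D' \subset C -> TD D' \subset AutC C ->
                 D' \subset D].

End Hamming.

(* Main.v *)
Require Import Defs.
From mathcomp Require Import all_boot all_order all_algebra all_fingroup.
From mathcomp Require Import zify.
Import GRing.Theory.
Set Implicit Arguments. Unset Strict Implicit. Unset Printing Implicit Defensive.

Lemma trE m (b x : vert m) : tr b x = (x + b)%R.
Proof. by rewrite /tr permE. Qed.
Lemma cpermE m (s : 'S_m) (x : vert m) : cperm s x = col_perm s x.
Proof. by rewrite /cperm permE. Qed.

Lemma F2_2 (a : 'F_2) : (a + a = 0)%R.
Proof. by case: a => [[|[|//]] ?]; apply/val_inj. Qed.

Lemma addvv m (x : vert m) : (x + x = 0)%R.
Proof. by apply/matrixP => i j; rewrite !mxE F2_2. Qed.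

Lemma oppv m (x : vert m) : (- x = x)%R.
Proof. by rewrite -[(- x)%R]add0r -(addvv x) addrK. Qed.

Lemma col_permD m (s : 'S_m) (x y : vert m) :
  col_perm s (x + y)%R = (col_perm s x + col_perm s y)%R.
Proof. by apply/matrixP => i j; rewrite !mxE. Qed.
Lemma col_perm0 m (s : 'S_m) : col_perm s (0 : vert m)%R = 0%R.
Proof. by apply/matrixP => i j; rewrite !mxE. Qed.

Definition isaff m (g : {perm vert m}) :=
  exists (s : 'S_m) (b : vert m), forall x, g x = (col_perm s x + b)%R.

Lemma AutHP m (g : {perm vert m}) : g \in AutH m <-> isaff g.
Proof.
split.
- case/mulsgP => t c /imsetP[b _ ->] /imsetP[s _ ->] ->.
  by exists s, (col_perm s b) => x; rewrite permM cpermE trE col_permD.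
- case=> s [b Hs]; apply/mulsgP.
  exists (tr (col_perm s^-1 b)) (cperm s); first exact: imset_f.
    exact: imset_f.
  apply/permP => x; rewrite permM cpermE trE col_permD Hs; congr (_ + _)%R.
  by rewrite -col_permM mulgV col_perm1.
Qed.

Lemma AutH_gs m : group_set (AutH m).
Proof.
apply/group_setP; split.
  by apply/AutHP; exists 1%g, 0%R => x; rewrite perm1 col_perm1 addr0.
move=> g h /AutHP[s [b Hs]] /AutHP[t [c Ht]]; apply/AutHP.
exists (t * s)%g, (col_perm t b + c)%R => x.
by rewrite permM Hs Ht col_permD col_permM addrA.
Qed.

Definition AutHg m := Group (AutH_gs m).

Lemma hdist_sym m (x y : vert m) : hdist x y = hdist y x.
Proof. by rewrite /hdist; apply: eq_card => i; rewrite !inE eq_sym. Qed.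

Lemma hdist_tr m (x y b : vert m) : hdist (x + b)%R (y + b)%R = hdist x y.
Proof. by rewrite /hdist; apply: eq_card => i; rewrite !inE !mxE (inj_eq (addIr _)). Qed.

Lemma hdist_perm m (s : 'S_m) (x y : vert m) :
  hdist (col_perm s x) (col_perm s y) = hdist x y.
Proof.
rewrite /hdist -[RHS](card_preimset _ (@perm_inj _ s)); apply: eq_card => i.
by rewrite !inE !mxE.
Qed.

Lemma hdist_aff m (g : {perm vert m}) x y : g \in AutH m -> hdist (g x) (g y) = hdist x y.
Proof. by case/AutHP=> s [b Hs]; rewrite !Hs hdist_tr hdist_perm. Qed.

Lemma hdist_tri m (x y z : vert m) : (hdist x z <= hdist x y + hdist y z)%N.
Proof.
rewrite /hdist; apply: leq_trans (leq_card_setU _ _).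
apply: subset_leq_card; apply/subsetP => i; rewrite !inE.
move=> H; case: (boolP (x 0%R i == y 0%R i)) => [/eqP E|//]; by rewrite -E H orbT.
Qed.

Lemma hdist_xx m (x : vert m) : hdist x x = 0.
Proof. by rewrite /hdist; apply/eqP; rewrite cards_eq0; apply/eqP/setP => i; rewrite !inE eqxx. Qed.

Lemma hdist_eq0 m (x y : vert m) : hdist x y = 0 -> x = y.
Proof.
move/eqP; rewrite cards_eq0 => /eqP E; apply/matrixP => i j.
rewrite (ord1 i); apply/eqP; apply/negPn/negP => H.
by have := in_set0 j; rewrite -E inE H.
Qed.

Lemma hdist_le m (x y : vert m) : (hdist x y <= m)%N.
Proof. by rewrite /hdist; apply: leq_trans (max_card _) _; rewrite card_ord. Qed.

Lemma hdist_0 m (x c : vert m) : hdist (x + c)%R 0 = hdist x c.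
Proof. by rewrite -(addvv c) hdist_tr. Qed.

Lemma dcode_le m (D : {set vert m}) a c : c \in D -> (dcode D a <= hdist a c)%N.
Proof.
move=> cD; rewrite /dcode.
have: c \in index_enum (vert m) by rewrite mem_index_enum.
elim: (index_enum _) => // x r IH; rewrite in_cons big_cons => /orP[/eqP<-|cr].
  by rewrite cD geq_minl.
by case: (x \in D) => /=; rewrite ?geq_min IH ?orbT.
Qed.

Lemma dcode_ge m (D : {set vert m}) a k : (k <= m)%N ->
  (forall c, c \in D -> k <= hdist a c)%N -> (k <= dcode D a)%N.
Proof.
move=> km H; rewrite /dcode; elim/big_ind: _ => //.
  by move=> p q kp kq; rewrite leq_min kp kq.
Qed.

Lemma dcode_att m (D : {set vert m}) a c0 : c0 \in D ->
  exists2 c, c \in D & dcode D a = hdist a c.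
Proof.
move=> c0D; have [c cD Hc] := @arg_minnP _ c0 (fun c => c \in D) (hdist a) c0D.
exists c => //; apply/eqP; rewrite eqn_leq dcode_le //= dcode_ge ?hdist_le //.
Qed.

Lemma dcode_inv m (g : {perm vert m}) (D : {set vert m}) a c0 : c0 \in D ->
  g \in AutH m -> [set g x | x in D] = D -> dcode D (g a) = dcode D a.
Proof.
move=> c0D gA E; have [c cD Hc] := dcode_att a c0D.
apply/eqP; rewrite eqn_leq; apply/andP; split.
  rewrite Hc -(hdist_aff _ _ gA); apply: dcode_le; rewrite -E; by apply/imsetP; exists c.
apply: (@dcode_ge m D (g a) (dcode D a)); first by rewrite Hc hdist_le.
move=> y; rewrite -E => /imsetP[x xD ->]; rewrite hdist_aff // E; exact: dcode_le xD.
Qed.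

Lemma gs_sub (gT : finGroupType) (G : {set gT}) (P : pred gT) : group_set G -> P 1%g ->
  (forall x y, x \in G -> y \in G -> P x -> P y -> P (x * y)%g) ->
  group_set [set x in G | P x].
Proof.
move=> Gg P1 PM; apply/group_setP; split; first by rewrite inE P1 (@group1 _ (Group Gg)).
move=> x y; rewrite !inE => /andP[xG Px] /andP[yG Py].
by rewrite (@groupM _ (Group Gg)) //= PM.
Qed.

Lemma stab1 m (D : {set vert m}) : [set (1%g : {perm vert m}) x | x in D] = D.
Proof. by rewrite (eq_imset _ (@perm1 _)) imset_id. Qed.

Lemma stabM m (D : {set vert m}) (g h : {perm vert m}) :
  [set g x | x in D] = D -> [set h x | x in D] = D -> [set (g * h)%g x | x in D] = D.
Proof.
move=> Eg Eh.
have -> : [set (g * h)%g x | x in D] = [set h x | x in [set g x | x in D]].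
  by rewrite -imset_comp; apply: eq_imset => x; rewrite permM.
by rewrite Eg Eh.
Qed.

Lemma setstab_gs m (X : {set {perm vert m}}) (D : {set vert m}) :
  group_set X -> group_set (setstab X D).
Proof.
move=> Xg; apply: (@gs_sub _ X (fun g => [set g x | x in D] == D)) => //.
  by rewrite /= stab1.
by move=> g h _ _ /eqP Eg /eqP Eh; rewrite /= stabM.
Qed.

Lemma AutC_gs m (C : {set vert m}) : group_set (AutC C).
Proof. exact: (setstab_gs C (AutH_gs m)). Qed.

Lemma stab0_gs m (X : {set {perm vert m}}) : group_set X -> group_set (stab0 X).
Proof.
move=> Xg; apply: (@gs_sub _ X (fun g => g 0%R == 0%R)) => //.
  by rewrite /= perm1.
by move=> g h _ _ /eqP Eg /eqP Eh; rewrite /= permM Eg Eh.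
Qed.

Lemma tr0 m : tr (0 : vert m)%R = 1%g.
Proof. by apply/permP => x; rewrite trE perm1 addr0. Qed.
Lemma trD m (a b : vert m) : tr (a + b)%R = (tr a * tr b)%g.
Proof. by apply/permP => x; rewrite permM !trE addrA. Qed.
Lemma tr_inj m : injective (@tr m).
Proof. by move=> a b E; have := congr1 (fun p : {perm vert m} => p 0%R) E; rewrite !trE !add0r. Qed.

Lemma tr_stab m (D : {set vert m}) b : lin_code D -> b \in D -> [set tr b x | x in D] = D.
Proof.
case=> D0 DD bD; apply/eqP; rewrite eqEcard card_imset; last exact: perm_inj.
rewrite leqnn andbT; apply/subsetP => y /imsetP[x xD ->]; rewrite trE DD //.
Qed.

Lemma AutC_sub m (C : {set vert m}) : AutC C \subset AutH m.
Proof. by apply/subsetP => g; rewrite inE => /andP[]. Qed.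

Lemma tr_in_X m (C Cmax : {set vert m}) b : (0 : vert m)%R \in C ->
  is_max_lin_subcode C Cmax -> tr b \in AutC C -> b \in Cmax.
Proof.
move=> H0 [_ _ _ Hmx] Htr.
pose XG := Group (AutC_gs C).
pose D' := [set b | tr b \in AutC C].
have memD : forall b, (b \in D') = (tr b \in XG) by move=> b'; rewrite /D' in_set.
have : D' \subset Cmax.
  apply: Hmx.
  - split; first by rewrite memD tr0 group1.
    by move=> x y; rewrite !memD trD => xX yX; rewrite groupM.
  - apply/subsetP => x; rewrite memD /= inE => /andP[_ /eqP E]; rewrite -E.
    by apply/imsetP; exists 0%R => //; rewrite trE add0r.
  - by apply/subsetP => g /imsetP[x]; rewrite memD => ? ->.
by move/subsetP; apply; rewrite memD.
Qed.

Lemma aff_add m (g : {perm vert m}) x y : g \in AutH m -> g 0%R = 0%R ->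
  g (x + y)%R = (g x + g y)%R.
Proof.
case/AutHP=> s [b Hs] g0; move: g0; rewrite Hs col_perm0 add0r => b0.
by rewrite !Hs b0 !addr0 col_permD.
Qed.

Lemma conj_tr m (g : {perm vert m}) b : g \in AutH m -> g 0%R = 0%R ->
  (tr b ^ g)%g = tr (g b).
Proof.
move=> gA g0; apply/permP => y.
by rewrite /conjg !permM trE aff_add // permKV trE.
Qed.

Lemma tr_Btr m (b : vert m) : tr b \in Btr m.
Proof. by apply: imset_f; rewrite inE. Qed.

Lemma kerM_B m (Y : {set {perm vert m}}) : kerM Y = Y :&: Btr m.
Proof.
apply/setP => g; rewrite !inE; case: (g \in Y) => //=.
apply/eqP/imsetP.
- move=> E; exists (g 0%R) => //; apply/permP => x.
  have := congr1 (fun p : {perm vert m} => p x) E.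
  rewrite /linpart permM trE perm1 => H.
  by rewrite trE -[LHS](subrK (g 0%R)) H.
- case=> b _ ->; apply/permP => x.
  by rewrite /linpart permM !trE perm1 add0r addrK.
Qed.

Lemma linpart_aff m (g : {perm vert m}) s b x :
  (forall y, g y = (col_perm s y + b)%R) -> linpart g x = col_perm s x.
Proof. by move=> Hs; rewrite /linpart permM trE !Hs col_perm0 add0r addrK. Qed.

Lemma linpartM m : {in AutHg m &, {morph (@linpart m) : x y / (x * y)%g >-> (x * y)%g}}.
Proof.
move=> g h /AutHP[s [b Hs]] /AutHP[t [c Ht]]; apply/permP => x.
have Hgh : forall y, (g * h)%g y = (col_perm (t * s) y + (col_perm t b + c))%R.
  by move=> y; rewrite permM Hs Ht col_permD col_permM addrA.
by rewrite (linpart_aff _ Hgh) permM (linpart_aff _ Hs) (linpart_aff _ Ht) col_permM.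
Qed.

Definition lpM m : {morphism AutHg m >-> {perm vert m}} := Morphism (@linpartM m).

Lemma linpart0 m (g : {perm vert m}) : g 0%R = 0%R -> linpart g = g.
Proof. by move=> g0; rewrite /linpart g0 oppr0 tr0 mulg1. Qed.

Lemma TD_gs m (D : {set vert m}) : lin_code D -> group_set (TD D).
Proof.
case=> D0 DD; apply/group_setP; split; first by rewrite -tr0; apply: imset_f.
move=> x y /imsetP[a aD ->] /imsetP[b bD ->]; rewrite -trD; apply: imset_f; exact: DD.
Qed.

Lemma mem_setstab m (X : {set {perm vert m}}) (D : {set vert m}) g :
  (g \in setstab X D) = (g \in X) && ([set g x | x in D] == D).
Proof. by rewrite /setstab in_set. Qed.
Lemma mem_stab0 m (X : {set {perm vert m}}) g :
  (g \in stab0 X) = (g \in X) && (g 0%R == 0%R).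
Proof. by rewrite /stab0 in_set. Qed.

Lemma Cmax_lin m (C Cmax : {set vert m}) : is_max_lin_subcode C Cmax -> lin_code Cmax.
Proof. by case. Qed.

Lemma T_sub_X m (C Cmax : {set vert m}) : is_max_lin_subcode C Cmax -> TD Cmax \subset AutC C.
Proof. by case. Qed.

Lemma XB_T m (C Cmax : {set vert m}) : (0 : vert m)%R \in C -> is_max_lin_subcode C Cmax ->
  AutC C :&: Btr m = TD Cmax.
Proof.
move=> H0 Hmax; apply/setP => g; rewrite inE; apply/andP/idP.
- case=> gX /imsetP[b _ Eg]; rewrite Eg in gX *; apply: imset_f; exact: tr_in_X gX.
- move=> gT; split; first exact: (subsetP (T_sub_X Hmax)).
  by case/imsetP: gT => b _ ->; apply: tr_Btr.
Qed.

Lemma X0_stab m (C Cmax : {set vert m}) g b : (0 : vert m)%R \in C -> is_max_lin_subcode C Cmax ->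
  g \in stab0 (AutC C) -> b \in Cmax -> g b \in Cmax.
Proof.
move=> H0 Hmax; rewrite mem_stab0 => /andP[gX /eqP g0] bC.
pose XG := Group (AutC_gs C).
have gA : g \in AutH m by apply: (subsetP (AutC_sub C)).
apply: (tr_in_X H0 Hmax); rewrite -conj_tr //.
apply: (@groupJ _ XG) => //; apply: (subsetP (T_sub_X Hmax)); exact: imset_f.
Qed.

Lemma stab_card m (g : {perm vert m}) (D : {set vert m}) :
  (forall b, b \in D -> g b \in D) -> [set g x | x in D] = D.
Proof.
move=> H; apply/eqP; rewrite eqEcard card_imset; last exact: perm_inj.
rewrite leqnn andbT; apply/subsetP => y /imsetP[x xD ->]; exact: H.
Qed.

Lemma X0_sub_Xmax m (C Cmax : {set vert m}) : (0 : vert m)%R \in C -> is_max_lin_subcode C Cmax ->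
  stab0 (AutC C) \subset setstab (AutC C) Cmax.
Proof.
move=> H0 Hmax; apply/subsetP => g gX0; rewrite mem_setstab.
have := gX0; rewrite mem_stab0 => /andP[-> _] /=.
apply/eqP; apply: stab_card => b bC; exact: (X0_stab H0 Hmax gX0 bC).
Qed.

Lemma T_sub_Xmax m (C Cmax : {set vert m}) : is_max_lin_subcode C Cmax ->
  TD Cmax \subset setstab (AutC C) Cmax.
Proof.
move=> Hmax; apply/subsetP => g gT; rewrite mem_setstab (subsetP (T_sub_X Hmax)) //=.
by case/imsetP: gT => b bC ->; rewrite tr_stab //; apply: Cmax_lin Hmax.
Qed.

Lemma X0_norm m (C Cmax : {set vert m}) : (0 : vert m)%R \in C -> is_max_lin_subcode C Cmax ->
  stab0 (AutC C) \subset ('N(TD Cmax))%g.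
Proof.
move=> H0 Hmax; apply/subsetP => g gX0; rewrite inE; apply/subsetP => t.
rewrite mem_conjg => /imsetP[b bC E].
have := gX0; rewrite mem_stab0 => /andP[gX /eqP g0].
have gA : g \in AutH m by apply: (subsetP (AutC_sub C)).
have -> : t = (tr b ^ g)%g by rewrite -E conjgKV.
rewrite conj_tr //; apply: imset_f; exact: (X0_stab H0 Hmax gX0 bC).
Qed.

Lemma part1 m (C Cmax : {set vert m}) : (0 : vert m)%R \in C -> is_max_lin_subcode C Cmax ->
  (TD Cmax ><| stab0 (AutC C))%g = setstab (AutC C) Cmax.
Proof.
move=> H0 Hmax.
have Hlin := Cmax_lin Hmax.
pose TG := Group (TD_gs Hlin).
pose X0G := Group (stab0_gs (AutC_gs C)).
pose XmG := Group (setstab_gs Cmax (AutC_gs C)).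
have HN : X0G \subset ('N(TG))%g by apply: X0_norm.
have HI : TG :&: X0G = 1%g.
  apply/trivgP/subsetP => g; rewrite inE => /andP[/imsetP[b _ ->]].
  by rewrite mem_stab0 => /andP[_ /eqP]; rewrite trE add0r => ->; rewrite tr0 inE.
have := sdprodE HN HI; rewrite /= => ->.
apply/eqP; rewrite eqEsubset; apply/andP; split.
  by apply: (@mul_subG _ XmG); [apply: T_sub_Xmax | apply: X0_sub_Xmax].
rewrite -(normC HN); apply/subsetP => g gXm.
have := gXm; rewrite mem_setstab => /andP[gX /eqP gC].
have g0C : g 0%R \in Cmax by rewrite -gC; apply/imsetP; exists 0%R => //; exact: (proj1 Hlin).
have -> : g = (linpart g * tr (g 0%R))%g.
  by rewrite /linpart -mulgA -trD addNr tr0 mulg1.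
apply: mem_mulg; last exact: imset_f.
rewrite mem_stab0; apply/andP; split.
  apply: (@groupM _ (Group (AutC_gs C))) => //.
  by apply: (subsetP (T_sub_X Hmax)); rewrite oppv; apply: imset_f.
by rewrite /linpart permM trE addrN.
Qed.

Lemma wt_dcode m (C D : {set vert m}) w i : mindist_ge C 5 -> D \subset C ->
  (0 : vert m)%R \in D -> hdist w 0%R = i -> (i <= 2)%N -> dcode D w = i.
Proof.
move=> Hmd DC D0 Hw Hi; apply/eqP; rewrite eqn_leq; apply/andP; split.
  by rewrite -Hw; apply: dcode_le.
apply: dcode_ge; first by rewrite -Hw hdist_le.
move=> c cD; case: (eqVneq c 0%R) => [->|cn0]; first by rewrite Hw.
have H5 : (5 <= hdist 0%R c)%N.
  by apply: Hmd; [exact: (subsetP DC _ D0) | exact: (subsetP DC _ cD) | rewrite eq_sym].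
have := hdist_tri 0%R w c; rewrite [hdist 0%R w]hdist_sym Hw => Ht.
lia.
Qed.

Lemma trans_i m (C Cmax : {set vert m}) i (w0 : vert m) : (0 : vert m)%R \in C ->
  completely_transitive C -> mindist_ge C 5 -> is_max_lin_subcode C Cmax ->
  (i <= 2)%N -> hdist w0 0%R = i ->
  [transitive setstab (AutC C) Cmax, on Ci Cmax i | 'P].
Proof.
move=> H0 Hct Hmd Hmax Hi Hw0.
have Hlin := Cmax_lin Hmax; have D0 : (0 : vert m)%R \in Cmax := proj1 Hlin.
have CmC : Cmax \subset C by case: Hmax.
pose XG := Group (AutC_gs C); pose XmG := Group (setstab_gs Cmax (AutC_gs C)).
have memCi : forall (D : {set vert m}) x, (x \in Ci D i) = (dcode D x == i).
  by move=> D x; rewrite /Ci in_set.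
have w0C : w0 \in Ci C i by rewrite memCi (wt_dcode Hmd (subxx C) H0 Hw0 Hi).
have w0Cm : w0 \in Ci Cmax i by rewrite memCi (wt_dcode Hmd CmC D0 Hw0 Hi).
have Htr : [transitive XG, on Ci C i | 'P].
  apply: Hct; rewrite /covrad; have := @leq_bigmax _ (dcode C) w0.
  by rewrite (wt_dcode Hmd (subxx C) H0 Hw0 Hi).
have key : forall a, a \in Ci Cmax i -> exists2 h, h \in XmG & h a = w0.
  move=> a; rewrite memCi => /eqP Ha.
  have [c cC Hc] := dcode_att a D0.
  have Hw1 : hdist (a + c)%R 0%R = i by rewrite hdist_0 -Hc.
  have w1C : (a + c)%R \in Ci C i by rewrite memCi (wt_dcode Hmd (subxx C) H0 Hw1 Hi).
  have [g gX Eg] := atransP2 Htr w1C w0C.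
  rewrite /= apermE in Eg.
  have gA : g \in AutH m by apply: (subsetP (AutC_sub C)).
  have gC : [set g x | x in C] = C by move: gX; rewrite /= /AutC in_set => /andP[_ /eqP].
  have g0C : g 0%R \in C by rewrite -gC; apply/imsetP; exists 0%R.
  have g00 : g 0%R = 0%R.
    apply/eqP; apply/negPn/negP => Hn.
    have H5 : (5 <= hdist (g 0%R) 0%R)%N by apply: Hmd.
    have H1 : hdist (g 0%R) w0 = i by rewrite Eg hdist_aff // hdist_sym.
    have := hdist_tri (g 0%R) w0 0%R; rewrite H1 Hw0 => Ht.
    lia.
  exists (tr c * g)%g.
    apply: (@groupM _ XmG).
      by apply: (subsetP (T_sub_Xmax Hmax)); apply: imset_f.
    by apply: (subsetP (X0_sub_Xmax H0 Hmax)); rewrite mem_stab0 gX g00 eqxx.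
  by rewrite permM trE Eg.
have inv : forall h x, h \in XmG -> x \in Ci Cmax i -> h x \in Ci Cmax i.
  move=> h x; rewrite /= mem_setstab => /andP[hX /eqP hC].
  have hA : h \in AutH m by apply: (subsetP (AutC_sub C)).
  by rewrite !memCi (dcode_inv _ D0).
apply/imsetP; exists w0 => //; apply/setP => x; apply/idP/orbitP.
- move=> xS; have [h hX hx] := key x xS.
  exists h^-1%g; first by rewrite (@groupV _ XmG).
  by rewrite /= apermE -hx permK.
- by case=> h hX <-; rewrite /= apermE; apply: inv.
Qed.

Lemma Ci0 m (C : {set vert m}) : (0 : vert m)%R \in C -> Ci C 0 = C.
Proof.
move=> H0; apply/setP => x; rewrite /Ci in_set; apply/eqP/idP.
- move=> Hx; have [c cC Hc] := dcode_att x H0.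
  by rewrite Hx in Hc; rewrite (hdist_eq0 (esym Hc)).
- by move=> xC; apply/eqP; rewrite -leqn0 -(hdist_xx x) dcode_le.
Qed.

Lemma cardX m (C : {set vert m}) : (0 : vert m)%R \in C -> completely_transitive C ->
  #|AutC C| = (#|C| * #|stab0 (AutC C)|)%N.
Proof.
move=> H0 Hct; pose XG := Group (AutC_gs C).
have Htr : [transitive XG, on Ci C 0 | 'P] := Hct 0 (leq0n _).
rewrite Ci0 // in Htr.
have := card_orbit_stab 'P XG 0%R; rewrite (atransP Htr _ H0).
have -> : ('C_XG[0%R | 'P])%g = stab0 (AutC C).
  apply/setP => g; rewrite mem_stab0 in_setI; congr (_ && _).
  by apply/astab1P/eqP; rewrite /= apermE.
by move=> <-.
Qed.

Lemma cardXmax m (C Cmax : {set vert m}) : (0 : vert m)%R \in C -> is_max_lin_subcode C Cmax ->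
  #|setstab (AutC C) Cmax| = (#|Cmax| * #|stab0 (AutC C)|)%N.
Proof.
move=> H0 Hmax; pose XmG := Group (setstab_gs Cmax (AutC_gs C)).
rewrite -(@sdprod_card _ XmG _ _ (part1 H0 Hmax)) card_imset //; exact: tr_inj.
Qed.

Lemma mem_kerM m (X : {set {perm vert m}}) g :
  (g \in kerM X) = (g \in X) && (linpart g == 1%g).
Proof. by rewrite /kerM in_set. Qed.

Lemma cardOnM m (C Cmax : {set vert m}) : (0 : vert m)%R \in C -> is_max_lin_subcode C Cmax ->
  (#|onM (AutC C)| * #|Cmax|)%N = #|AutC C|.
Proof.
move=> H0 Hmax; pose XG := Group (AutC_gs C).
have XA : XG \subset AutHg m := AutC_sub C.
have E1 : onM (AutC C) = (lpM m @* XG)%g by rewrite morphimEsub.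
rewrite E1 card_morphim (setIidPr XA) -indexgI.
have E2 : XG :&: ('ker (lpM m))%g = TD Cmax.
  rewrite -(XB_T H0 Hmax) -kerM_B; apply/setP => g; rewrite in_setI mem_kerM /=.
  case gX: (g \in AutC C) => //=.
  by apply/(@kerP _ _ (AutHg m) (lpM m) g (subsetP XA g gX))/eqP.
rewrite E2.
have Hlin := Cmax_lin Hmax; pose TG := Group (TD_gs Hlin).
rewrite -(card_imset _ (@tr_inj m)) mulnC.
exact: (@Lagrange _ XG TG (T_sub_X Hmax)).
Qed.

Lemma onM0 m (X : {set {perm vert m}}) : onM (stab0 X) = stab0 X.
Proof.
rewrite /onM (eq_in_imset (g := id)); first by rewrite imset_id.
by move=> g; rewrite mem_stab0 => /andP[_ /eqP]; apply: linpart0.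
Qed.

Lemma XmB_T m (C Cmax : {set vert m}) : (0 : vert m)%R \in C -> is_max_lin_subcode C Cmax ->
  setstab (AutC C) Cmax :&: Btr m = TD Cmax.
Proof.
move=> H0 Hmax; apply/eqP; rewrite eqEsubset; apply/andP; split.
  rewrite -(XB_T H0 Hmax); apply: setSI; apply/subsetP => g; rewrite mem_setstab.
  by case/andP.
rewrite subsetI T_sub_Xmax //=; apply/subsetP => g /imsetP[b _ ->]; exact: tr_Btr.
Qed.

Lemma exist_wt m i : (i <= 2)%N -> (i <= m)%N -> exists w : vert m, hdist w 0%R = i.
Proof.
case: i => [|[|[|//]]] _ Hm.
- by exists 0%R; rewrite hdist_xx.
- pose a : 'I_m := Ordinal Hm.
  exists (delta_mx ord0 a); rewrite /hdist; apply: (etrans _ (cards1 a)); apply: eq_card => j; rewrite !inE !mxE eqxx /=.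
  by case: (j == a); rewrite /= ?eqxx // eq_sym oner_eq0.
- have H0 : (0 < m)%N by apply: leq_trans Hm.
  pose a : 'I_m := Ordinal H0; pose b : 'I_m := Ordinal Hm.
  have ab : a != b by [].
  exists (delta_mx ord0 a + delta_mx ord0 b)%R; rewrite /hdist.
  have c2 : #|[set a; b]| = 2%N by rewrite cards2 ab.
  apply: (etrans _ c2); apply: eq_card => j; rewrite !inE !mxE eqxx /= [j == a]eq_sym [j == b]eq_sym.
  case: (eqVneq a j) => [Ea|_]; case: (eqVneq b j) => [Eb|_] /=.
  all: try done.
  by move: ab; rewrite Ea Eb eqxx.
Qed.

Theorem proposition2p7 (m : nat) (C Cmax : {set vert m}) :
  (0 : vert m)%R \in C ->
  completely_transitive C ->
  mindist_ge C 5 ->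
  is_max_lin_subcode C Cmax ->
  2 <= dimc Cmax <= m - 2 ->
  let X := AutC C in
  let Xmax := setstab X Cmax in
  let X0 := stab0 X in
  let T := TD Cmax in
  [/\ (* 1 *) (T ><| X0)%g = Xmax,
      (* 2 *) nbr_trans Xmax Cmax 2 /\ mindist_ge Cmax 5,
      (* 3 *) kerM X = kerM Xmax /\ kerM X = X :&: Btr m /\
              X :&: Btr m = Xmax :&: Btr m /\ Xmax :&: Btr m = T,
      (* 4 *) forall g, g \in X0 ->
                {morph g : x y / (x + y)%R} /\ [set g x | x in Cmax] = Cmax
    & (* 5 *) (#|C|%:R / #|Cmax|%:R = #|X|%:R / #|Xmax|%:R :> rat)%R /\
              (#|X|%:R / #|Xmax|%:R = #|onM X|%:R / #|onM X0|%:R :> rat)%R ].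
Proof.
move=> H0 Hct Hmd Hmax Hdim X Xmax X0 T.
rewrite /X /Xmax /X0 /T.
have Hm : (2 <= m)%N by move: Hdim => /andP[]; lia.
have CmC : Cmax \subset C by case: Hmax.
have D0 : (0 : vert m)%R \in Cmax := proj1 (Cmax_lin Hmax).
split.
- exact: part1.
- split; last by move=> x y xC yC; apply: Hmd; apply: (subsetP CmC).
  split.
    apply/subsetP => g; rewrite mem_setstab => /andP[gX gC].
    by rewrite /AutC in_set gC andbT; apply: (subsetP (AutC_sub C)).
  move=> i Hi; have [w Hw] := exist_wt (leq_trans Hi (leqnn 2)) (leq_trans Hi Hm).
  exact: (trans_i H0 Hct Hmd Hmax Hi Hw).
- by rewrite !kerM_B (XB_T H0 Hmax) (XmB_T H0 Hmax).
- move=> g gX0; split.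
    have := gX0; rewrite mem_stab0 => /andP[gX /eqP g0] x y.
    by apply: aff_add => //; apply: (subsetP (AutC_sub C)).
  by have := subsetP (X0_sub_Xmax H0 Hmax) g gX0; rewrite mem_setstab => /andP[_ /eqP].
- rewrite onM0.
  have x0p : (0 < #|stab0 (AutC C)|)%N.
    by apply/card_gt0P; exists 1%g; apply: (@group1 _ (Group (stab0_gs (AutC_gs C)))).
  have cMp : (0 < #|Cmax|)%N by apply/card_gt0P; exists 0%R.
  have E1 := cardX H0 Hct; have E2 := cardXmax H0 Hmax; have E3 := cardOnM H0 Hmax.
  have nx0 : (#|stab0 (AutC C)|%:R != 0 :> rat)%R by rewrite Num.Theory.pnatr_eq0 -lt0n.
  have ncM : (#|Cmax|%:R != 0 :> rat)%R by rewrite Num.Theory.pnatr_eq0 -lt0n.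
  rewrite E2; split.
    by rewrite E1 !natrM -mulf_div divff // mulr1.
  by rewrite -E3 !natrM [(_ * #|Cmax|%:R)%R]mulrC -mulf_div divff // mul1r.
Qed.
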